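(* QHC is a strongly conservative extension of intuitionistic predicate calculus QH: if $\alpha_1,\dots,\alpha_n,\alpha$ are problems built from atomic problems and $\bot$ using only intuitionistic connectives and quantifiers (no $!$, $?$), and $\alpha_1,\dots,\alpha_n\vdash_{\mathrm{QHC}}\alpha$, then $\alpha_1,\dots,\alpha_n\vdash_{\mathrm{QH}}\alpha$.
   Context: QHC is a two-sorted first-order calculus. Its only terms are individual variables. Every formula is either a problem (denoted by Greek letters $\alpha,\beta,\gamma,\dots$) or a proposition (denoted by Latin letters $p,q,\dots$). Atomic formulas are proposition variables $p(t_1,\dots,t_n)$ (of proposition type), problem variables $\pi(t_1,\dots,t_n)$ (of problem type), and the constants $0$ (a proposition, classical falsity) and $\bot$ (a problem, intuitionistic absurdity). Propositions are closed under the classical connectives $\land,\lor,\to$ and quantifiers $\exists,\forall$; problems are closed under the intuitionistic connectives $\land,\lor,\to$ and quantifiers $\exists,\forall$ (the same symbols are used, distinguished by the type of the arguments). $\neg p$ abbreviates $p\to 0$, $\neg\alpha$ abbreviates $\alpha\to\bot$, and $\leftrightarrow$ is defined as usual. There are two type-conversion operators: if $p$ is a proposition then $!p$ is a problem, and if $\alpha$ is a problem then $?\alpha$ is a proposition. Deductive system of QHC: all axioms and rules of classical predicate logic applied to all propositions; all postulates and rules of intuitionistic predicate logic applied to all problems; the rules $p\,/\,!p$ and $\alpha\,/\,?\alpha$; and the schemas $?!p\to p$; $\alpha\to\, !?\alpha$; $!(p\to q)\to(!p\to !q)$; $?(\alpha\to\beta)\to(?\alpha\to ?\beta)$; $!0\to\bot$;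 $?(\alpha\land\beta)\leftrightarrow ?\alpha\land ?\beta$; $?(\alpha\lor\beta)\leftrightarrow ?\alpha\lor ?\beta$; $?\bot\to 0$; $?\exists x\,\alpha(x)\leftrightarrow\exists x\,?\alpha(x)$; $?\forall x\,\alpha(x)\to\forall x\,?\alpha(x)$ (usual variable side conditions implicit). $\vdash A$ means $A$ is derivable in QHC; $A\Rightarrow B$ means $\vdash A\to B$ and $A\Leftrightarrow B$ means $\vdash A\leftrightarrow B$ (with $A,B$ of the same type); $A\vdash B$ means $B$ is derivable in QHC from the premise $A$. Notation: $\Box p := ?!p$ (a proposition) and $\nabla\alpha := !?\alpha$ (a problem). QC and QH denote classical and intuitionistic predicate calculus. *)

(* Defs.v *)
(* Syntax and deductive systems of QHC and QH.
   Individual variables are de Bruijn indices (terms are only variables). *)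
From Stdlib Require Import List.
Import ListNotations.

Inductive sort : Type := SPrp | SPrb.

Inductive form : sort -> Type :=
| Atom  : forall s, nat -> list nat -> form s
| Fal   : forall s, form s                      (* 0 for SPrp, bot for SPrb *)
| Conj  : forall s, form s -> form s -> form s
| Disj  : forall s, form s -> form s -> form s
| Imp   : forall s, form s -> form s -> form s
| All   : forall s, form s -> form s
| Ex    : forall s, form s -> form s
| Bang  : form SPrp -> form SPrb
| Quest : form SPrb -> form SPrp.

Definition up (f : nat -> nat) : nat -> nat :=
  fun n => match n with 0 => 0 | S m => S (f m) end.

Fixpoint rename {s} (f : nat -> nat) (A : form s) : form s :=
  match A in form s return form s with
  | Atom s n ts => Atom s n (map f ts)
  | Fal s => Fal s
  | Conj s A B => Conj s (rename f A) (rename f B)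
  | Disj s A B => Disj s (rename f A) (rename f B)
  | Imp s A B => Imp s (rename f A) (rename f B)
  | All s A => All s (rename (up f) A)
  | Ex s A => Ex s (rename (up f) A)
  | Bang p => Bang (rename f p)
  | Quest a => Quest (rename f a)
  end.

Definition inst (t : nat) : nat -> nat :=
  fun n => match n with 0 => t | S m => m end.

Definition lift {s} (A : form s) : form s := rename S A.
Definition subst1 {s} (t : nat) (A : form s) : form s := rename (inst t) A.
Definition Iff {s} (A B : form s) : form s := Conj s (Imp s A B) (Imp s B A).

(* Derivability in QHC from a list of problem premises.
   Premises may be used like axioms; all rules (incl. generalization and
   p/!p, alpha/?alpha) apply to derived formulas. *)
Inductive QHC_der (G : list (form SPrb)) : forall s, form s -> Prop :=
| q_hyp : forall a, In a G -> QHC_der G SPrb a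
| q_ax1 : forall s (A B : form s), QHC_der G s (Imp s A (Imp s B A))
| q_ax2 : forall s (A B C : form s),
    QHC_der G s (Imp s (Imp s A (Imp s B C)) (Imp s (Imp s A B) (Imp s A C)))
| q_ax3 : forall s (A B : form s), QHC_der G s (Imp s (Conj s A B) A)
| q_ax4 : forall s (A B : form s), QHC_der G s (Imp s (Conj s A B) B)
| q_ax5 : forall s (A B : form s), QHC_der G s (Imp s A (Imp s B (Conj s A B)))
| q_ax6 : forall s (A B : form s), QHC_der G s (Imp s A (Disj s A B))
| q_ax7 : forall s (A B : form s), QHC_der G s (Imp s B (Disj s A B))
| q_ax8 : forall s (A B C : form s),
    QHC_der G s (Imp s (Imp s A C) (Imp s (Imp s B C) (Imp s (Disj s A B) C)))
| q_ax9 : forall s (A : form s), QHC_der G s (Imp s (Fal s) A)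
| q_dne : forall (A : form SPrp),
    QHC_der G SPrp (Imp SPrp (Imp SPrp (Imp SPrp A (Fal SPrp)) (Fal SPrp)) A)
| q_all_e : forall s (A : form s) t, QHC_der G s (Imp s (All s A) (subst1 t A))
| q_ex_i : forall s (A : form s) t, QHC_der G s (Imp s (subst1 t A) (Ex s A))
| q_mp : forall s (A B : form s), QHC_der G s (Imp s A B) -> QHC_der G s A -> QHC_der G s B
| q_gen : forall s (A : form s), QHC_der G s A -> QHC_der G s (All s A)
| q_all_r : forall s (A B : form s),
    QHC_der G s (Imp s (lift B) A) -> QHC_der G s (Imp s B (All s A))
| q_ex_r : forall s (A B : form s),
    QHC_der G s (Imp s A (lift B)) -> QHC_der G s (Imp s (Ex s A) B)
| q_bang_r : forall p, QHC_der G SPrp p -> QHC_der G SPrb (Bang p)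
| q_quest_r : forall a, QHC_der G SPrb a -> QHC_der G SPrp (Quest a)
| q_s1 : forall p, QHC_der G SPrp (Imp SPrp (Quest (Bang p)) p)
| q_s2 : forall a, QHC_der G SPrb (Imp SPrb a (Bang (Quest a)))
| q_s3 : forall p q, QHC_der G SPrb
    (Imp SPrb (Bang (Imp SPrp p q)) (Imp SPrb (Bang p) (Bang q)))
| q_s4 : forall a b, QHC_der G SPrp
    (Imp SPrp (Quest (Imp SPrb a b)) (Imp SPrp (Quest a) (Quest b)))
| q_s5 : QHC_der G SPrb (Imp SPrb (Bang (Fal SPrp)) (Fal SPrb))
| q_s6 : forall a b, QHC_der G SPrp
    (Iff (Quest (Conj SPrb a b)) (Conj SPrp (Quest a) (Quest b)))
| q_s7 : forall a b, QHC_der G SPrp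
    (Iff (Quest (Disj SPrb a b)) (Disj SPrp (Quest a) (Quest b)))
| q_s8 : QHC_der G SPrp (Imp SPrp (Quest (Fal SPrb)) (Fal SPrp))
| q_s9 : forall a, QHC_der G SPrp (Iff (Quest (Ex SPrb a)) (Ex SPrp (Quest a)))
| q_s10 : forall a, QHC_der G SPrp (Imp SPrp (Quest (All SPrb a)) (All SPrp (Quest a))).

Inductive iform : Type :=
| IAtom : nat -> list nat -> iform
| IBot  : iform
| IConj : iform -> iform -> iform
| IDisj : iform -> iform -> iform
| IImp  : iform -> iform -> iform
| IAll  : iform -> iform
| IEx   : iform -> iform.

Fixpoint irename (f : nat -> nat) (A : iform) : iform :=
  match A with
  | IAtom n ts => IAtom n (map f ts)
  | IBot => IBot
  | IConj A B => IConj (irename f A) (irename f B)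
  | IDisj A B => IDisj (irename f A) (irename f B)
  | IImp A B => IImp (irename f A) (irename f B)
  | IAll A => IAll (irename (up f) A)
  | IEx A => IEx (irename (up f) A)
  end.

Definition ilift (A : iform) : iform := irename S A.
Definition isubst1 (t : nat) (A : iform) : iform := irename (inst t) A.

Inductive QH_der (G : list iform) : iform -> Prop :=
| h_hyp : forall a, In a G -> QH_der G a
| h_ax1 : forall A B, QH_der G (IImp A (IImp B A))
| h_ax2 : forall A B C,
    QH_der G (IImp (IImp A (IImp B C)) (IImp (IImp A B) (IImp A C)))
| h_ax3 : forall A B, QH_der G (IImp (IConj A B) A)
| h_ax4 : forall A B, QH_der G (IImp (IConj A B) B)
| h_ax5 : forall A B, QH_der G (IImp A (IImp B (IConj A B)))
| h_ax6 : forall A B, QH_der G (IImp A (IDisj A B))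
| h_ax7 : forall A B, QH_der G (IImp B (IDisj A B))
| h_ax8 : forall A B C,
    QH_der G (IImp (IImp A C) (IImp (IImp B C) (IImp (IDisj A B) C)))
| h_ax9 : forall A, QH_der G (IImp IBot A)
| h_all_e : forall A t, QH_der G (IImp (IAll A) (isubst1 t A))
| h_ex_i : forall A t, QH_der G (IImp (isubst1 t A) (IEx A))
| h_mp : forall A B, QH_der G (IImp A B) -> QH_der G A -> QH_der G B
| h_gen : forall A, QH_der G A -> QH_der G (IAll A)
| h_all_r : forall A B, QH_der G (IImp (ilift B) A) -> QH_der G (IImp B (IAll A))
| h_ex_r : forall A B, QH_der G (IImp A (ilift B)) -> QH_der G (IImp (IEx A) B).

Fixpoint emb (A : iform) : form SPrb :=
  match A with
  | IAtom n ts => Atom SPrb n ts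
  | IBot => Fal SPrb
  | IConj A B => Conj SPrb (emb A) (emb B)
  | IDisj A B => Disj SPrb (emb A) (emb B)
  | IImp A B => Imp SPrb (emb A) (emb B)
  | IAll A => All SPrb (emb A)
  | IEx A => Ex SPrb (emb A)
  end.

(* Main.v *)
Require Import Defs.
From Stdlib Require Import List.
Import ListNotations.

Definition ineg (X : iform) := IImp X IBot.
Definition nn (X : iform) := ineg (ineg X).
Definition w (s : sort) (X : iform) : iform :=
  match s with SPrp => nn X | SPrb => X end.

Fixpoint tr {s} (A : form s) : iform :=
  match A with
  | Atom s n ts => w s (IAtom n ts)
  | Fal s => w s IBot
  | Conj s A B => w s (IConj (tr A) (tr B))
  | Disj s A B => w s (IDisj (tr A) (tr B))
  | Imp s A B => w s (IImp (tr A) (tr B))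
  | All s A => w s (IAll (tr A))
  | Ex s A => w s (IEx (tr A))
  | Bang p => tr p
  | Quest a => nn (tr a)
  end.

Lemma irename_ext : forall X f g, (forall n, f n = g n) -> irename f X = irename g X.
Proof.
  induction X; intros f g H; simpl; f_equal; auto.
  - apply map_ext; auto.
  - apply IHX; intros [|n]; simpl; auto.
  - apply IHX; intros [|n]; simpl; auto.
Qed.

Lemma irename_comp : forall X f g, irename f (irename g X) = irename (fun n => f (g n)) X.
Proof.
  induction X; intros f g; simpl; f_equal; auto.
  - rewrite map_map; auto.
  - rewrite IHX; apply irename_ext; intros [|n]; reflexivity.
  - rewrite IHX; apply irename_ext; intros [|n]; reflexivity.
Qed.

Lemma irename_id : forall X f, (forall n, f n = n) -> irename f X = X.
Proof.
  induction X; intros f H; simpl; f_equal; auto.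
  - rewrite (map_ext f (fun x => x)); auto. apply map_id.
  - apply IHX; intros [|n]; simpl; auto.
  - apply IHX; intros [|n]; simpl; auto.
Qed.

Lemma subst_up : forall X, isubst1 0 (irename (up S) X) = X.
Proof.
  intros X. unfold isubst1. rewrite irename_comp. apply irename_id.
  intros [|n]; reflexivity.
Qed.

Lemma tr_rename : forall s (A : form s) f, tr (rename f A) = irename f (tr A).
Proof.
  induction A; intros f; simpl;
  try (destruct s; simpl); 
  repeat match goal with H : forall f, tr (rename f ?X) = _ |- _ => rewrite H end;
  reflexivity.
Qed.

Lemma tr_emb : forall a, tr (emb a) = a.
Proof. induction a; simpl; congruence. Qed.

Section ND.
Variable G : list iform.

Fixpoint imps (D : list iform) (B : iform) : iform :=
  match D with [] => B | A :: D' => imps D' (IImp A B) end.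
Definition Nd D B := QH_der G (imps D B).

Lemma qh_id A : QH_der G (IImp A A).
Proof.
  exact (h_mp _ _ _ (h_mp _ _ _ (h_ax2 G A (IImp A A) A) (h_ax1 G A (IImp A A))) (h_ax1 G A A)).
Qed.

Lemma nd_basic D : (forall A B, Nd D (IImp A B) -> Nd D A -> Nd D B) /\
                   (forall X, QH_der G X -> Nd D X).
Proof.
  induction D as [|a D [mpD axD]]; split; unfold Nd in *; simpl; intros.
  - eapply h_mp; eauto.
  - auto.
  - eapply mpD; [eapply mpD; [apply axD; apply h_ax2|]|]; eauto.
  - eapply mpD; [apply axD; apply h_ax1|]. auto.
Qed.

Lemma nd_mp D A B : Nd D (IImp A B) -> Nd D A -> Nd D B.
Proof. apply (proj1 (nd_basic D)). Qed.
Lemma nd_ax D X : QH_der G X -> Nd D X.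
Proof. apply (proj2 (nd_basic D)). Qed.
Lemma nd_intro D A B : Nd (A :: D) B -> Nd D (IImp A B).
Proof. auto. Qed.
Lemma nd_cl X : Nd [] X -> QH_der G X.
Proof. auto. Qed.

Lemma nd_hyp D A : In A D -> Nd D A.
Proof.
  induction D as [|a D IH]; intros H; simpl in H; [destruct H|].
  destruct H as [<-|H].
  - change (Nd D (IImp a a)). apply nd_ax, qh_id.
  - change (Nd D (IImp a A)). eapply nd_mp; [apply nd_ax, h_ax1|]. auto.
Qed.

Lemma nd_elim_list D D' B : Nd D' (imps D B) -> incl D D' -> Nd D' B.
Proof.
  revert B; induction D as [|a D IH]; simpl; intros B H Hi; auto.
  eapply nd_mp. apply IH; [exact H|]. intros z Hz; apply Hi; simpl; auto.
  apply nd_hyp, Hi; simpl; auto.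
Qed.

Lemma nd_weaken D D' B : Nd D B -> incl D D' -> Nd D' B.
Proof. intros H Hi. eapply nd_elim_list; [apply nd_ax; exact H|exact Hi]. Qed.

Lemma nd_pair D A B : Nd D A -> Nd D B -> Nd D (IConj A B).
Proof. intros. eapply nd_mp; [eapply nd_mp; [apply nd_ax, h_ax5|]|]; eauto. Qed.
Lemma nd_fst D A B : Nd D (IConj A B) -> Nd D A.
Proof. intros. eapply nd_mp; [apply nd_ax, h_ax3|]; eauto. Qed.
Lemma nd_snd D A B : Nd D (IConj A B) -> Nd D B.
Proof. intros. eapply nd_mp; [apply nd_ax, h_ax4|]; eauto. Qed.
Lemma nd_inl D A B : Nd D A -> Nd D (IDisj A B).
Proof. intros. eapply nd_mp; [apply nd_ax, h_ax6|]; eauto. Qed.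
Lemma nd_inr D A B : Nd D B -> Nd D (IDisj A B).
Proof. intros. eapply nd_mp; [apply nd_ax, h_ax7|]; eauto. Qed.
Lemma nd_case D A B C : Nd D (IDisj A B) -> Nd (A :: D) C -> Nd (B :: D) C -> Nd D C.
Proof.
  intros H0 H1 H2.
  eapply nd_mp; [eapply nd_mp; [eapply nd_mp; [apply nd_ax, (h_ax8 G A B C)|]|]|]; eauto.
Qed.
Lemma nd_abort D X : Nd D IBot -> Nd D X.
Proof. intros. eapply nd_mp; [apply nd_ax, h_ax9|]; eauto. Qed.

Ltac hyp := apply nd_hyp; simpl; repeat (first [left; reflexivity | right]).
Ltac inc := let z := fresh in let Hz := fresh in intros z Hz; simpl in *; tauto.

Lemma nd_eta D X : Nd D X -> Nd D (nn X).
Proof.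
  intros H. unfold nn, ineg. apply nd_intro.
  apply nd_mp with X; [hyp|]. eapply nd_weaken; [exact H|inc].
Qed.

Lemma nd_bind D X Y : Nd D (nn X) -> Nd (X :: D) (nn Y) -> Nd D (nn Y).
Proof.
  intros H1 H2. unfold nn, ineg in *. apply nd_intro.
  apply nd_mp with (IImp X IBot).
  - eapply nd_weaken; [exact H1|inc].
  - apply nd_intro. apply nd_mp with (IImp Y IBot).
    + eapply nd_weaken; [exact H2|inc].
    + hyp.
Qed.

Lemma nd_stab D Y : QH_der G (IImp (nn Y) Y) -> Nd D (nn Y) -> Nd D Y.
Proof. intros H1 H2. eapply nd_mp; [apply nd_ax; exact H1| exact H2]. Qed.

Lemma nd_botstab D : Nd D (nn IBot) -> Nd D IBot.
Proof. intros H. eapply nd_mp; [exact H|apply nd_ax, qh_id]. Qed.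

Lemma stab_nn X : QH_der G (IImp (nn (nn X)) (nn X)).
Proof. apply nd_cl, nd_intro. eapply nd_bind; hyp. Qed.

Lemma tr_stable_gen : forall s (A : form s),
  match s return form s -> Prop with
  | SPrp => fun A => QH_der G (IImp (nn (tr A)) (tr A))
  | SPrb => fun _ => True end A.
Proof.
  intros s A; destruct A; simpl;
  repeat match goal with s : sort |- _ => destruct s end; simpl; try exact I;
  apply stab_nn.
Qed.

Lemma tr_stable (A : form SPrp) : QH_der G (IImp (nn (tr A)) (tr A)).
Proof. exact (tr_stable_gen SPrp A). Qed.

End ND.

Section Cases.
Variable G : list iform.
Ltac hyp := apply nd_hyp; simpl; repeat (first [left; reflexivity | right]).
Notation St X := (QH_der G (IImp (nn X) X)).
Ltac eta := apply nd_eta.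
Ltac intro_ := apply nd_intro.
Ltac ax H := apply nd_ax; exact H.

Lemma L_ax1 P Q : QH_der G (nn (IImp P (nn (IImp Q P)))).
Proof. apply nd_cl. eta; intro_; eta; intro_; hyp. Qed.

Lemma L_ax2 A B C : St C ->
  QH_der G (nn (IImp (nn (IImp A (nn (IImp B C)))) (nn (IImp (nn (IImp A B)) (nn (IImp A C)))))).
Proof.
  intros SC. apply nd_cl. eta; intro_; eta; intro_; eta; intro_.
  apply nd_stab; auto.
  apply nd_bind with (IImp A (nn (IImp B C))); [hyp|].
  apply nd_bind with (IImp B C); [eapply nd_mp; hyp|].
  apply nd_bind with (IImp A B); [hyp|].
  eta. eapply nd_mp; [hyp|]. eapply nd_mp; hyp.
Qed.

Lemma L_ax3 A B : St A -> QH_der G (nn (IImp (nn (IConj A B)) A)).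
Proof.
  intros SA. apply nd_cl. eta; intro_. apply nd_stab; auto.
  apply nd_bind with (IConj A B); [hyp|]. eta. eapply nd_fst; hyp.
Qed.
Lemma L_ax4 A B : St B -> QH_der G (nn (IImp (nn (IConj A B)) B)).
Proof.
  intros SA. apply nd_cl. eta; intro_. apply nd_stab; auto.
  apply nd_bind with (IConj A B); [hyp|]. eta. eapply nd_snd; hyp.
Qed.
Lemma L_ax5 A B : QH_der G (nn (IImp A (nn (IImp B (nn (IConj A B)))))).
Proof. apply nd_cl. eta; intro_; eta; intro_; eta; apply nd_pair; hyp. Qed.
Lemma L_ax6 A B : QH_der G (nn (IImp A (nn (IDisj A B)))).
Proof. apply nd_cl. eta; intro_; eta; apply nd_inl; hyp. Qed.
Lemma L_ax7 A B : QH_der G (nn (IImp B (nn (IDisj A B)))).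
Proof. apply nd_cl. eta; intro_; eta; apply nd_inr; hyp. Qed.

Lemma L_ax8 A B C : St C ->
  QH_der G (nn (IImp (nn (IImp A C)) (nn (IImp (nn (IImp B C)) (nn (IImp (nn (IDisj A B)) C)))))).
Proof.
  intros SC. apply nd_cl. eta; intro_; eta; intro_; eta; intro_.
  apply nd_stab; auto.
  apply nd_bind with (IDisj A B); [hyp|].
  eapply nd_case; [hyp| |].
  - apply nd_bind with (IImp A C); [hyp|]. eta; eapply nd_mp; hyp.
  - apply nd_bind with (IImp B C); [hyp|]. eta; eapply nd_mp; hyp.
Qed.

Lemma L_ax9 A : QH_der G (nn (IImp (nn IBot) A)).
Proof. apply nd_cl. eta; intro_. apply nd_abort, nd_botstab; hyp. Qed.

Lemma L_dne A : St A ->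
  QH_der G (nn (IImp (nn (IImp (nn (IImp A (nn IBot))) (nn IBot))) A)).
Proof.
  intros SA. apply nd_cl. eta; intro_. apply nd_stab; auto.
  unfold nn at 1, ineg at 1 2; intro_.
  apply nd_botstab.
  apply nd_bind with (IImp (nn (IImp A (nn IBot))) (nn IBot)); [hyp|].
  eapply nd_mp; [hyp|]. eta. intro_. apply nd_abort.
  apply nd_mp with A; hyp.
Qed.

Lemma L_mp A B : St B -> QH_der G (nn (IImp A B)) -> QH_der G A -> QH_der G B.
Proof.
  intros SB H1 H2. apply nd_cl. apply nd_stab; auto.
  apply nd_bind with (IImp A B); [ax H1|]. eta. eapply nd_mp; [hyp|]. ax H2.
Qed.

Lemma L_all_e P t : St (isubst1 t P) -> QH_der G (nn (IImp (nn (IAll P)) (isubst1 t P))).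
Proof.
  intros S1. apply nd_cl. eta; intro_. apply nd_stab; auto.
  apply nd_bind with (IAll P); [hyp|]. eta. eapply nd_mp; [apply nd_ax, h_all_e|hyp].
Qed.

Lemma L_ex_i P t : QH_der G (nn (IImp (isubst1 t P) (nn (IEx P)))).
Proof. apply nd_cl. eta; intro_; eta. eapply nd_mp; [apply nd_ax, h_ex_i|hyp]. Qed.

Lemma L_gen P : QH_der G P -> QH_der G (nn (IAll P)).
Proof. intros H. apply nd_cl. eta. apply nd_ax, h_gen, H. Qed.

Lemma unnn A B : St B -> QH_der G (nn (IImp A B)) -> QH_der G (IImp A B).
Proof.
  intros SB H. apply nd_cl; intro_. apply nd_stab; auto.
  apply nd_bind with (IImp A B); [ax H|]. eta. eapply nd_mp; hyp.
Qed.

Lemma L_all_r A B : St A -> QH_der G (nn (IImp (ilift B) A)) -> QH_der G (nn (IImp B (nn (IAll A)))).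
Proof.
  intros SA H. apply unnn in H; auto. apply h_all_r in H.
  apply nd_cl. eta; intro_; eta. eapply nd_mp; [ax H|hyp].
Qed.

Lemma L_ex_r A B : St (ilift B) -> St B -> QH_der G (nn (IImp A (ilift B))) ->
  QH_der G (nn (IImp (nn (IEx A)) B)).
Proof.
  intros S1 SB H. apply unnn in H; auto. apply h_ex_r in H.
  apply nd_cl. eta; intro_. apply nd_stab; auto.
  apply nd_bind with (IEx A); [hyp|]. eta. eapply nd_mp; [ax H|hyp].
Qed.

Lemma L_s1 P : St P -> QH_der G (nn (IImp (nn P) P)).
Proof. intros SP. apply nd_cl. eta. ax SP. Qed.
Lemma L_s2 A : QH_der G (IImp A (nn A)).
Proof. apply nd_cl. intro_; eta; hyp. Qed.
Lemma L_s3 P Q : St Q -> QH_der G (IImp (nn (IImp P Q)) (IImp P Q)).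
Proof.
  intros SQ. apply nd_cl. intro_; intro_. apply nd_stab; auto.
  apply nd_bind with (IImp P Q); [hyp|]. eta. eapply nd_mp; hyp.
Qed.
Lemma L_s4 A B : QH_der G (nn (IImp (nn (IImp A B)) (nn (IImp (nn A) (nn B))))).
Proof.
  apply nd_cl. eta; intro_; eta; intro_.
  apply nd_bind with (IImp A B); [hyp|].
  apply nd_bind with A; [hyp|]. eta. eapply nd_mp; hyp.
Qed.
Lemma L_s5 : QH_der G (IImp (nn IBot) IBot).
Proof. apply nd_cl. intro_. apply nd_botstab; hyp. Qed.

Lemma L_iff X Y : QH_der G (IImp X Y) -> QH_der G (IImp Y X) ->
  QH_der G (nn (IConj (nn (IImp X Y)) (nn (IImp Y X)))).
Proof. intros. apply nd_cl. eta. apply nd_pair; eta; apply nd_ax; auto. Qed.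

Lemma L_s6 A B : QH_der G (nn (IConj (nn (IImp (nn (IConj A B)) (nn (IConj (nn A) (nn B)))))
                                     (nn (IImp (nn (IConj (nn A) (nn B))) (nn (IConj A B)))))).
Proof.
  apply L_iff; apply nd_cl; intro_.
  - apply nd_bind with (IConj A B); [hyp|]. eta. apply nd_pair; eta.
    + eapply nd_fst; hyp.
    + eapply nd_snd; hyp.
  - apply nd_bind with (IConj (nn A) (nn B)); [hyp|].
    apply nd_bind with A; [eapply nd_fst; hyp|].
    apply nd_bind with B; [eapply nd_snd; hyp|].
    eta. apply nd_pair; hyp.
Qed.

Lemma L_s7 A B : QH_der G (nn (IConj (nn (IImp (nn (IDisj A B)) (nn (IDisj (nn A) (nn B)))))
                                     (nn (IImp (nn (IDisj (nn A) (nn B))) (nn (IDisj A B)))))).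
Proof.
  apply L_iff; apply nd_cl; intro_.
  - apply nd_bind with (IDisj A B); [hyp|]. eapply nd_case; [hyp| |].
    + eta. apply nd_inl. eta. hyp.
    + eta. apply nd_inr. eta. hyp.
  - apply nd_bind with (IDisj (nn A) (nn B)); [hyp|]. eapply nd_case; [hyp| |].
    + apply nd_bind with A; [hyp|]. eta. apply nd_inl. hyp.
    + apply nd_bind with B; [hyp|]. eta. apply nd_inr. hyp.
Qed.

Lemma L_s8 : QH_der G (nn (IImp (nn IBot) (nn IBot))).
Proof. apply nd_cl. eta. apply nd_ax, qh_id. Qed.

Lemma L_s9 A : QH_der G (nn (IConj (nn (IImp (nn (IEx A)) (nn (IEx (nn A)))))
                                   (nn (IImp (nn (IEx (nn A))) (nn (IEx A)))))).
Proof.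
  assert (E1 : QH_der G (IImp (IEx A) (IEx (nn A)))).
  { apply h_ex_r.
    pose proof (h_ex_i G (nn (irename (up S) A)) 0) as Ei.
    change (QH_der G (IImp (nn (isubst1 0 (irename (up S) A))) (IEx (nn (irename (up S) A))))) in Ei.
    rewrite subst_up in Ei.
    change (QH_der G (IImp A (IEx (nn (irename (up S) A))))).
    apply nd_cl. intro_. eapply nd_mp; [ax Ei|]. eta. hyp. }
  assert (E2 : QH_der G (IImp (IEx (nn A)) (nn (IEx A)))).
  { apply h_ex_r.
    pose proof (h_ex_i G (irename (up S) A) 0) as Ei.
    rewrite subst_up in Ei.
    change (QH_der G (IImp (nn A) (nn (IEx (irename (up S) A))))).
    apply nd_cl. intro_. apply nd_bind with A; [hyp|]. eta. eapply nd_mp; [ax Ei|hyp]. }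
  apply L_iff; apply nd_cl; intro_.
  - apply nd_bind with (IEx A); [hyp|]. eta. eapply nd_mp; [ax E1|hyp].
  - apply nd_bind with (IEx (nn A)); [hyp|]. eapply nd_mp; [ax E2|hyp].
Qed.

Lemma L_s10 A : QH_der G (nn (IImp (nn (IAll A)) (nn (IAll (nn A))))).
Proof.
  assert (E1 : QH_der G (IImp (IAll A) (IAll (nn A)))).
  { apply h_all_r.
    pose proof (h_all_e G (irename (up S) A) 0) as Ei.
    rewrite subst_up in Ei.
    change (QH_der G (IImp (IAll (irename (up S) A)) (nn A))).
    apply nd_cl. intro_. eta. eapply nd_mp; [ax Ei|hyp]. }
  apply nd_cl. eta. intro_. apply nd_bind with (IAll A); [hyp|]. eta. eapply nd_mp; [ax E1|hyp].
Qed.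

Lemma L_quest A : QH_der G A -> QH_der G (nn A).
Proof. intros H. apply nd_cl. eta. ax H. Qed.

End Cases.

Lemma tr_lift s (A : form s) : tr (lift A) = ilift (tr A).
Proof. apply tr_rename. Qed.
Lemma tr_subst s t (A : form s) : tr (subst1 t A) = isubst1 t (tr A).
Proof. apply tr_rename. Qed.

Ltac st := first [apply tr_stable | rewrite <- tr_subst; apply tr_stable
                | rewrite <- tr_lift; apply tr_stable].
Ltac fin := first
  [ solve [apply h_ax1] | solve [apply h_ax2] | solve [apply h_ax3] | solve [apply h_ax4]
  | solve [apply h_ax5] | solve [apply h_ax6] | solve [apply h_ax7] | solve [apply h_ax8]
  | solve [apply h_ax9] | solve [apply h_all_e] | solve [apply h_ex_i]
  | solve [apply h_gen; auto] | solve [apply h_all_r; auto] | solve [apply h_ex_r; auto]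
  | solve [apply L_ax1] | solve [apply L_ax2; st] | solve [apply L_ax3; st]
  | solve [apply L_ax4; st] | solve [apply L_ax5] | solve [apply L_ax6] | solve [apply L_ax7]
  | solve [apply L_ax8; st] | solve [apply L_ax9] | solve [apply L_dne; st]
  | solve [apply L_all_e; st] | solve [apply L_ex_i] | solve [apply L_gen; auto]
  | solve [apply L_all_r; [st|auto]] | solve [apply L_ex_r; [st|st|auto]]
  | solve [auto] | solve [apply L_quest; auto]
  | solve [apply L_s1; st] | solve [apply L_s2] | solve [apply L_s3; st]
  | solve [apply L_s4] | solve [apply L_s5] | solve [apply L_s6] | solve [apply L_s7]
  | solve [apply L_s8] | solve [apply L_s9] | solve [apply L_s10]
  | solve [eapply L_mp; [st|eauto|eauto]] | solve [eapply h_mp; eauto] ].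

Lemma main (Gamma : list iform) : forall s (A : form s),
  QHC_der (map emb Gamma) s A -> QH_der Gamma (tr A).
Proof.
  intros s A H. induction H;
  try (destruct s); simpl in *;
  try rewrite tr_subst in *; try rewrite tr_lift in *.
  { apply in_map_iff in H as [b [<- Hb]]. rewrite tr_emb. apply h_hyp; auto. }
  all: solve [fin].
Qed.

Theorem theorem3p5 (Gamma : list iform) (alpha : iform) :
  QHC_der (map emb Gamma) SPrb (emb alpha) -> QH_der Gamma alpha.
Proof.
  intros H. rewrite <- (tr_emb alpha). exact (main Gamma SPrb (emb alpha) H).
Qed.
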